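(* Let $K\ge 2$, let $\Delta^{K-1}=\{\boldsymbol{p}\in[0,1]^K:\sum_{k=1}^K p_k=1\}$, and let $\boldsymbol{\alpha}=(\alpha_1,\dots,\alpha_K)$ with $\alpha_k>1$ for all $k$ and $\alpha_0=\sum_{k=1}^K\alpha_k$. Let $g(\boldsymbol{p})=\alpha_0^{\alpha_0}\prod_{k=1}^K (p_k/\alpha_k)^{\alpha_k}$ be the Dirichlet possibility function with parameter $\boldsymbol{\alpha}$, so that $\log g(\boldsymbol{p})=\alpha_0\log\alpha_0+\sum_{k=1}^K\alpha_k\log(p_k/\alpha_k)$. Let $\boldsymbol{y}\in\{0,1\}^K$ be a one-hot label vector and let $\ell(\boldsymbol{p},\boldsymbol{y})=-\sum_{k=1}^K y_k\log p_k$ be the cross-entropy loss. Then the maximiser $$\tilde{\boldsymbol{p}}^*=\arg\max_{\boldsymbol{p}\in\Delta^{K-1}}\big[\log g(\boldsymbol{p})+\ell(\boldsymbol{p},\boldsymbol{y})\big]$$ is given by $$\tilde{\boldsymbol{p}}^*=\frac{1}{\alpha_0-1}(\boldsymbol{\alpha}-\boldsymbol{y}).$$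
   Context: In the paper, $\boldsymbol{\alpha}=\Phi'_{\boldsymbol{\psi}}(\boldsymbol{x})$ is the output of a neural network for an input $\boldsymbol{x}$, and $g=g_{\boldsymbol{\psi}}(\cdot\mid\boldsymbol{x})$ is the learned Dirichlet possibility function on the probability simplex; the result concerns only the fixed vector $\boldsymbol{\alpha}$. Convention: $\alpha_k^{\alpha_k}=1$ when $\alpha_k=0$ (not needed here since $\alpha_k>1$). *)

(* Defs.v *)
From HB Require Import structures.
From mathcomp Require Import all_boot all_order all_algebra.
From mathcomp Require Import all_classical all_reals all_analysis.
Set Implicit Arguments. Unset Strict Implicit. Unset Printing Implicit Defensive.
Import Order.TTheory GRing.Theory Num.Theory.
Local Open Scope ring_scope.

Definition in_simplex (R : realType) (K : nat) (p : 'I_K -> R) : Prop :=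
  (forall k, 0 <= p k <= 1) /\ \sum_(k < K) p k = 1.

Definition alpha0 (R : realType) (K : nat) (alpha : 'I_K -> R) : R :=
  \sum_(k < K) alpha k.

Definition dirichlet_poss (R : realType) (K : nat) (alpha p : 'I_K -> R) : R :=
  (alpha0 alpha) `^ (alpha0 alpha) * \prod_(k < K) (p k / alpha k) `^ (alpha k).

Definition one_hot (R : realType) (K : nat) (y : 'I_K -> R) : Prop :=
  exists j : 'I_K, forall k, y k = (k == j)%:R.

Definition cross_entropy (R : realType) (K : nat) (p y : 'I_K -> R) : R :=
  - \sum_(k < K) y k * ln (p k).

(* Objective log g(p) + l(p, y) (used on the interior of the simplex). *)
Definition objective (R : realType) (K : nat) (alpha y p : 'I_K -> R) : R :=
  ln (dirichlet_poss alpha p) + cross_entropy p y.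

(* Main.v *)
Require Import Defs.
From HB Require Import structures.
From mathcomp Require Import all_boot all_order all_algebra.
From mathcomp Require Import all_classical all_reals all_analysis.
From mathcomp Require Import ring lra.
Import Order.TTheory GRing.Theory Num.Theory.
Local Open Scope ring_scope.

Lemma ln_prod_pos (R : realType) (K : nat) (f : 'I_K -> R) :
  (forall k, 0 < f k) -> ln (\prod_(k < K) f k) = \sum_(k < K) ln (f k).
Proof.
move=> hf.
suff [] : (\sum_(k < K) ln (f k) = ln (\prod_(k < K) f k)) /\ 0 < \prod_(k < K) f k by [].
apply: (big_ind2 (fun s p => s = ln p /\ 0 < p)).
- by rewrite ln1.
- move=> x1 x2 y1 y2 [-> h1] [-> h2]; split; last exact: mulr_gt0.
  by rewrite lnM // posrE.
- by move=> i _; split.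
Qed.

Lemma ln_le_sub1 (R : realType) (t : R) : 0 < t -> ln t <= t - 1.
Proof.
move=> ht; have := expR_ge1Dx (ln t); rewrite lnK ?posrE // => h.
by rewrite lerBrDl.
Qed.

Lemma ln_lt_sub1 (R : realType) (t : R) : 0 < t -> t != 1 -> ln t < t - 1.
Proof.
move=> ht ht1; have : ln t != 0.
  apply/negP => /eqP h; move/eqP: ht1; apply; by rewrite -(lnK ht) h expR0.
move=> /expR_gt1Dx; rewrite lnK ?posrE // => h.
by rewrite ltrBrDl.
Qed.

Lemma obj_formula (R : realType) (K : nat) (alpha y q : 'I_K -> R) :
  (forall k, 0 < alpha k) -> (forall k, 0 < q k) -> 0 < alpha0 alpha ->
  objective alpha y q = alpha0 alpha * ln (alpha0 alpha)
     - \sum_(k < K) alpha k * ln (alpha k)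
     + \sum_(k < K) (alpha k - y k) * ln (q k).
Proof.
move=> ha hq a0pos.
rewrite /objective /dirichlet_poss /cross_entropy.
rewrite lnM ?posrE; last 2 first.
- exact: powR_gt0.
- by apply: prodr_gt0 => k _; apply: powR_gt0; apply: divr_gt0.
rewrite ln_powR ln_prod_pos; last by move=> k; apply: powR_gt0; apply: divr_gt0.
under eq_bigr do rewrite ln_powR ln_div ?posrE //.
have -> : \sum_(k < K) alpha k * (ln (q k) - ln (alpha k)) =
  \sum_(k < K) alpha k * ln (q k) - \sum_(k < K) alpha k * ln (alpha k).
  by rewrite -sumrB; apply: eq_bigr => k _; rewrite mulrBr.
have -> : \sum_(k < K) (alpha k - y k) * ln (q k) =
  \sum_(k < K) alpha k * ln (q k) - \sum_(k < K) y k * ln (q k).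
  by rewrite -sumrB; apply: eq_bigr => k _; rewrite mulrBl.
lra.
Qed.

Lemma pt_le (R : realType) (b B x s : R) : 0 < b -> 0 < B -> 0 < x -> s = b / B ->
  b * ln x <= b * ln s + (B * x - b).
Proof.
move=> hb hB hx hs.
have sp : 0 < s by rewrite hs divr_gt0.
have e : ln x = ln (x / s) + ln s by rewrite ln_div ?posrE //; ring.
have e2 : B * x - b = b * (x / s - 1).
  rewrite hs; field; by rewrite ?gt_eqF.
rewrite e e2 mulrDr addrC lerD2l ler_pM2l //.
by apply: ln_le_sub1; rewrite divr_gt0.
Qed.

Lemma pt_lt (R : realType) (b B x s : R) : 0 < b -> 0 < B -> 0 < x -> s = b / B ->
  x != s -> b * ln x < b * ln s + (B * x - b).
Proof.
move=> hb hB hx hs hxs.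
have sp : 0 < s by rewrite hs divr_gt0.
have e : ln x = ln (x / s) + ln s by rewrite ln_div ?posrE //; ring.
have e2 : B * x - b = b * (x / s - 1).
  rewrite hs; field; by rewrite ?gt_eqF.
rewrite e e2 mulrDr addrC ltrD2l ltr_pM2l //.
apply: ln_lt_sub1; first by rewrite divr_gt0.
apply: contra hxs => /eqP h; apply/eqP.
by rewrite -[x](mulfVK (x:=s)) ?gt_eqF // h mul1r.
Qed.

Theorem proposition1 (R : realType) (K : nat) (hK : (2 <= K)%N)
  (alpha : 'I_K -> R) (halpha : forall k, 1 < alpha k)
  (y : 'I_K -> R) (hy : one_hot y) :
  let pstar := fun k => (alpha k - y k) / (alpha0 alpha - 1) in
  in_simplex pstar /\ (forall k, 0 < pstar k) /\
  (forall p : 'I_K -> R, in_simplex p -> (forall k, 0 < p k) -> p <> pstar ->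
     objective alpha y p < objective alpha y pstar).
Proof.
move=> pstar; case: hy => j hj.
have hy01 : forall k, 0 <= y k <= 1 by move=> k; rewrite hj; case: (k == j); rewrite /= ?lexx ?ler01.
have hb : forall k, 0 < alpha k - y k.
  move=> k; have := halpha k; have := hy01 k; case/andP => _ h1 h2; lra.
have sy : \sum_(k < K) y k = 1.
  under eq_bigr do rewrite hj.
  by rewrite (bigD1 j) //= eqxx big1 ?addr0 // => k /negbTE ->.
set B := alpha0 alpha - 1.
have hB : B = \sum_(k < K) (alpha k - y k) by rewrite sumrB sy.
have hle : forall k, alpha k - y k <= B.
  move=> k; rewrite hB (bigD1 k) //= lerDl sumr_ge0 // => i _; exact: ltW.
have Bpos : 0 < B := lt_le_trans (hb j) (hle j).
have ps_pos : forall k, 0 < pstar k by move=> k; rewrite divr_gt0.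
have sumps : \sum_(k < K) pstar k = 1.
  by rewrite /pstar -mulr_suml -/B -hB divff // gt_eqF.
have simp : in_simplex pstar.
  split => // k; rewrite ltW //= ler_pdivrMr // mul1r; exact: hle.
have ha : forall k, 0 < alpha k by move=> k; exact: lt_trans ltr01 (halpha k).
have a0pos : 0 < alpha0 alpha by have := Bpos; rewrite /B; lra.
split; first done. split; first done.
move=> p [_ sp] pp neq.
rewrite !obj_formula // ltrD2l.
have [k0 hk0] : exists k, p k != pstar k.
  apply: contra_notP neq => H; apply: funext => k.
  case: (boolP (p k == pstar k)) => [/eqP //|hk]; exfalso; apply: H; by exists k.
apply: (@lt_le_trans _ _ (\sum_(k < K) ((alpha k - y k) * ln (pstar k) + (B * p k - (alpha k - y k))))).
  rewrite (bigD1 k0) //= [X in _ < X](bigD1 k0) //=.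
  apply: ltr_leD.
    exact: pt_lt.
  apply: ler_sum => k _; exact: pt_le.
rewrite big_split /= sumrB -mulr_sumr sp -hB mulr1 subrr addr0.
done.
Qed.
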